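(* Let $S$ be a finite set of $m\ge 1$ discrete probability distributions and let $\mathcal G_S$ be the output of the greedy coupling algorithm on $S$. Then $$H(\mathcal G_S)\le H(\textsc{Profile}_S)+\frac{1+\log_2 e}{2}.$$
   Context: Distributions are finite vectors of nonnegative reals summing to $1$, with states sorted in non-increasing order. Greedy coupling algorithm: maintain the remaining masses of the states of each distribution in $S$. Repeatedly: let $r=\min_{p\in S}\max_j p(j)$; if $r=0$ stop; otherwise append $r$ as the next state of $\mathcal G_S$ and subtract $r$ from the largest remaining state of every distribution in $S$ (ties broken arbitrarily). $\mathcal G_S$ is the resulting sequence of state masses, with $H(\mathcal G_S)=\sum_t \mathcal G_S(t)\log_2(1/\mathcal G_S(t))$. For a distribution $p$, $\textsc{Sketch}_p:(0,1]\to\mathbb R$ is $\textsc{Sketch}_p(x)=p(i)$ for $x\in(\sum_{j>i}p(j),\sum_{j\ge i}p(j)]$; $\textsc{Profile}_S(x)=\min_{p\in S}\textsc{Sketch}_p(x)$; and $H(\textsc{Profile}_S)=\int_0^{1}\log_2(1/\textsc{Profile}_S(x))\,dx$. *)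

(* Defs.v *)
From Stdlib Require Import Reals List Sorting.Sorted.
From Coquelicot Require Import Coquelicot.
Import ListNotations.
Open Scope R_scope.

Definition log2 (y : R) : R := ln y / ln 2.

Definition suml (l : list R) : R := fold_right Rplus 0 l.

(* A distribution: finite vector of nonnegative reals summing to 1,
   states sorted in non-increasing order (state i = nth i p 0, 0-indexed). *)
Definition is_distr (p : list R) : Prop :=
  List.Forall (fun a : R => (0 <= a)%R) p /\ suml p = 1 /\ Sorted (fun a b : R => (a >= b)%R) p.

(* Sketch_p(x) = p(i) for x in (sum_{j>i} p(j), sum_{j>=i} p(j)].
   Written recursively: for p = a :: q, x lies in the interval of the first
   state iff x > sum q (= sum_{j>0} p(j)); otherwise recurse on the tail.
   (Value 0 outside (0,1], which is irrelevant.) *)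
Fixpoint Sketch (p : list R) (x : R) : R :=
  match p with
  | [] => 0
  | a :: q => if Rlt_dec (suml q) x then a else Sketch q x
  end.

Definition Profile (S : list (list R)) (x : R) : R :=
  match S with
  | [] => 0
  | p :: S' => fold_right (fun q acc => Rmin (Sketch q x) acc) (Sketch p x) S'
  end.

Definition H_Profile (S : list (list R)) : R :=
  RInt (fun x => log2 (/ Profile S x)) 0 1.

Definition H_seq (g : list R) : R :=
  fold_right (fun a acc => a * log2 (/ a) + acc) 0 g.

Definition maxl (p : list R) : R := fold_right Rmax 0 p.

Definition minmax (st : list (list R)) : R :=
  match st with
  | [] => 0
  | p :: st' => fold_right (fun q acc => Rmin (maxl q) acc) (maxl p) st'
  end.

Fixpoint replace_nth (i : nat) (v : R) (l : list R) : list R :=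
  match l, i with
  | [], _ => []
  | _ :: q, O => v :: q
  | a :: q, S i' => a :: replace_nth i' v q
  end.

Definition sub_largest (r : R) (p p' : list R) : Prop :=
  exists i, (i < length p)%nat /\ nth i p 0 = maxl p /\
            p' = replace_nth i (nth i p 0 - r) p.

(* greedy_run st g : starting from remaining masses st, the greedy algorithm
   (with some choice of tie-breaking) outputs the sequence of state masses g. *)
Inductive greedy_run : list (list R) -> list R -> Prop :=
| greedy_stop : forall st, minmax st = 0 -> greedy_run st []
| greedy_step : forall st st' g,
    minmax st <> 0 ->
    List.Forall2 (sub_largest (minmax st)) st st' ->
    greedy_run st' g ->
    greedy_run st (minmax st :: g).

(* Main.v *)
Require Import Defs.
From Stdlib Require Import Reals List.
From Coquelicot Require Import Coquelicot.
Import ListNotations.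
Open Scope R_scope.
From Stdlib Require Import Lra Lia.

Fixpoint bp (p : list R) : list R :=
  match p with [] => [] | a :: q => suml q :: bp q end.

Lemma between_lt x y z : z < Rmin x y -> ~ (Rmin x y <= z <= Rmax x y).
Proof. intros H [H1 H2]; lra. Qed.

Lemma sketch_const p x y :
  (forall z, In z (bp p) -> ~ (Rmin x y <= z <= Rmax x y)) -> Sketch p x = Sketch p y.
Proof.
  induction p as [|a q IH]; simpl; intros H; auto.
  assert (H0 : ~ (Rmin x y <= suml q <= Rmax x y)) by (apply H; left; auto).
  destruct (Rlt_dec (suml q) x) as [h1|h1]; destruct (Rlt_dec (suml q) y) as [h2|h2];
    try reflexivity;
    try (exfalso; apply H0; unfold Rmin, Rmax; destruct Rle_dec; lra).
  apply IH; intros z Hz; apply H; right; auto.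
Qed.

Lemma prof_const (Sd : list (list R)) x y :
  (forall z, In z (flat_map bp Sd) -> ~ (Rmin x y <= z <= Rmax x y)) -> Profile Sd x = Profile Sd y.
Proof.
  destruct Sd as [|p Sd']; simpl; intros H; auto.
  induction Sd' as [|q Sd'' IH]; simpl in *.
  - apply sketch_const; intros z Hz; apply H; apply in_or_app; left; auto.
  - rewrite IH.
    + rewrite (sketch_const q x y); auto.
      intros z Hz; apply H; apply in_or_app; right; apply in_or_app; left; auto.
    + intros z Hz; apply H. apply in_app_or in Hz; destruct Hz as [Hz|Hz];
      apply in_or_app; [left; auto| right; apply in_or_app; right; auto].
Qed.

Lemma prof_le (Sd : list (list R)) q x : In q Sd -> Profile Sd x <= Sketch q x.
Proof.
  destruct Sd as [|p Sd']; simpl; [tauto|].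
  intros [<-|Hq].
  - induction Sd' as [|r Sd'' IH]; simpl; [lra|]. eapply Rle_trans; [apply Rmin_r|]; auto.
  - induction Sd' as [|r Sd'' IH]; simpl in *; [tauto|].
    destruct Hq as [<-|Hq]; [apply Rmin_l|]. eapply Rle_trans; [apply Rmin_r|]; auto.
Qed.

Lemma prof_attained (Sd : list (list R)) x : Sd <> [] -> exists q, In q Sd /\ Profile Sd x = Sketch q x.
Proof.
  destruct Sd as [|p Sd']; simpl; [tauto|]. intros _.
  induction Sd' as [|r Sd'' IH]; simpl.
  - exists p; auto.
  - unfold Rmin; destruct Rle_dec.
    + exists r; simpl; auto.
    + destruct IH as [q [Hq E]]; exists q; split; auto. simpl in Hq |- *; tauto.
Qed.

Lemma suml_nonneg p : List.Forall (fun a => 0 <= a) p -> 0 <= suml p.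
Proof. induction 1; simpl; lra. Qed.

Lemma sketch_le p x : List.Forall (fun a => 0 <= a) p -> Sketch p x <= suml p.
Proof.
  induction 1 as [|a q Ha Hq IH]; simpl; [lra|].
  pose proof (suml_nonneg q Hq). destruct Rlt_dec; lra.
Qed.

Lemma sketch_pos p x : List.Forall (fun a => 0 <= a) p -> 0 < x <= suml p -> 0 < Sketch p x.
Proof.
  induction 1 as [|a q Ha Hq IH]; simpl; [lra|]. intros Hx.
  destruct Rlt_dec; [lra|]. apply IH; lra.
Qed.

Definition wsum (phi : R -> R) (f : R -> R) (L : list (R * R)) : R :=
  fold_right (fun pr acc => fst pr * phi (f (snd pr)) + acc) 0 L.

Lemma wsum_app phi f L1 L2 : wsum phi f (L1 ++ L2) = wsum phi f L1 + wsum phi f L2.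
Proof. induction L1; simpl; [lra|]. unfold wsum in *; simpl; rewrite IHL1; lra. Qed.

Lemma is_RInt_val (f : R -> R) a b (l l' : R) : is_RInt f a b l -> l = l' -> is_RInt f a b l'.
Proof. intros H <-; exact H. Qed.

Lemma is_RInt_cst (c a b : R) : is_RInt (fun _ => c) a b ((b - a) * c).
Proof. exact (is_RInt_const a b c). Qed.

Lemma is_RInt_Chasles' (f : R -> R) a b c l1 l2 :
  is_RInt f a b l1 -> is_RInt f b c l2 -> is_RInt f a c (l1 + l2).
Proof. intros H1 H2; exact (is_RInt_Chasles f a b c l1 l2 H1 H2). Qed.

Lemma decomp (l : list R) : forall (f : R -> R) a b, a <= b ->
  (forall x y, a < x < b -> a < y < b ->
     (forall z, In z l -> ~ (Rmin x y <= z <= Rmax x y)) -> f x = f y) ->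
  exists L, (forall pr, In pr L -> a < snd pr < b) /\
    forall phi : R -> R, is_RInt (fun x => phi (f x)) a b (wsum phi f L).
Proof.
  induction l as [|z l IH]; intros f a b Hab Hf.
  - destruct (Req_dec a b) as [E|E].
    + subst b. exists []. split; [simpl; tauto|]. intros phi. exact (is_RInt_point _ _).
    + exists [(b - a, (a + b) / 2)]. split.
      * intros pr [<-|[]]; simpl; lra.
      * intros phi. unfold wsum; simpl.
        apply is_RInt_val with ((b - a) * phi (f ((a + b) / 2))); [|ring].
        apply is_RInt_ext with (fun _ => phi (f ((a + b) / 2))); [|apply is_RInt_cst].
        intros x Hx. rewrite Rmin_left in Hx by lra. rewrite Rmax_right in Hx by lra.
        f_equal. apply Hf; try lra. intros w [].
  - destruct (Rlt_dec a z) as [h1|h1]; [destruct (Rlt_dec z b) as [h2|h2]|].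
    + destruct (IH f a z) as [L1 [HL1 I1]]; [lra| |].
      { intros x y Hx Hy Hn. apply Hf; try lra. intros w [<-|Hw]; [|auto].
        unfold Rmin, Rmax; destruct Rle_dec; lra. }
      destruct (IH f z b) as [L2 [HL2 I2]]; [lra| |].
      { intros x y Hx Hy Hn. apply Hf; try lra. intros w [<-|Hw]; [|auto].
        unfold Rmin, Rmax; destruct Rle_dec; lra. }
      exists (L1 ++ L2). split.
      * intros pr Hpr. apply in_app_or in Hpr. destruct Hpr as [H|H];
          [apply HL1 in H|apply HL2 in H]; lra.
      * intros phi. rewrite wsum_app. eapply is_RInt_Chasles'; eauto.
    + apply IH; auto. intros x y Hx Hy Hn. apply Hf; auto. intros w [<-|Hw]; [|auto].
      unfold Rmin, Rmax; destruct Rle_dec; lra.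
    + apply IH; auto. intros x y Hx Hy Hn. apply Hf; auto. intros w [<-|Hw]; [|auto].
      unfold Rmin, Rmax; destruct Rle_dec; lra.
Qed.

Lemma sketch_int (phi : R -> R) p : List.Forall (fun a => 0 <= a) p ->
  is_RInt (fun x => phi (Sketch p x)) 0 (suml p) (fold_right (fun a acc => a * phi a + acc) 0 p).
Proof.
  induction 1 as [|a q Ha Hq IH]; simpl.
  - exact (is_RInt_point _ _).
  - assert (Hs : 0 <= suml q) by (clear IH; induction Hq; simpl; lra).
    apply is_RInt_val with (fold_right (fun a0 acc => a0 * phi a0 + acc) 0 q + a * phi a); [|ring].
    apply is_RInt_Chasles' with (suml q).
    + apply is_RInt_ext with (fun x => phi (Sketch q x)); [|exact IH].
      intros x Hx. rewrite Rmin_left in Hx by lra. rewrite Rmax_right in Hx by lra.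
      destruct Rlt_dec; [lra|auto].
    + apply is_RInt_val with ((a + suml q - suml q) * phi a); [|ring].
      apply is_RInt_ext with (fun _ => phi a); [|apply is_RInt_cst].
      intros x Hx. rewrite Rmin_left in Hx by lra. rewrite Rmax_right in Hx by lra.
      destruct Rlt_dec; [auto|lra].
Qed.
Lemma int_inv a b : 0 < a -> 0 < b -> is_RInt (fun v => / v) a b (ln b - ln a).
Proof.
  intros Ha Hb.
  assert (Hm : 0 < Rmin a b) by (unfold Rmin; destruct Rle_dec; lra).
  apply (is_RInt_derive ln (fun v => / v) a b).
  - intros x Hx. apply is_derive_ln. lra.
  - intros x Hx. apply continuous_Rinv. lra.
Qed.

Definition J (g v : R) : R := if Rle_dec g v then / v else 0.
Definition K (u v : R) : R :=
  if Rlt_dec v (u / 2) then / u else if Rlt_dec v u then / (2 * v) else / v.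

Lemma J_int g : 0 < g <= 1 -> is_RInt (J g) 0 1 (- ln g).
Proof.
  intros Hg.
  apply is_RInt_val with ((g - 0) * 0 + (ln 1 - ln g)); [|rewrite ln_1; ring].
  apply is_RInt_Chasles' with g.
  - apply is_RInt_ext with (fun _ => 0); [|apply is_RInt_cst].
    intros x Hx. rewrite Rmin_left in Hx by lra. rewrite Rmax_right in Hx by lra.
    unfold J; destruct Rle_dec; lra.
  - apply is_RInt_ext with (fun v => / v); [|apply int_inv; lra].
    intros x Hx. rewrite Rmin_left in Hx by lra. rewrite Rmax_right in Hx by lra.
    unfold J; destruct Rle_dec; [auto|lra].
Qed.

Lemma K_int u : 0 < u <= 1 -> is_RInt (K u) 0 1 ((1 + ln 2) / 2 - ln u).
Proof.
  intros Hu.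
  assert (E : ln (u / 2) = ln u - ln 2).
  { unfold Rdiv. rewrite ln_mult by (try apply Rinv_0_lt_compat; lra). rewrite ln_Rinv by lra. ring. }
  apply is_RInt_val with ((u / 2 - 0) * / u + (/ 2 * (ln u - ln (u / 2)) + (ln 1 - ln u)));
    [|rewrite E, ln_1; field; lra].
  apply is_RInt_Chasles' with (u / 2).
  - apply is_RInt_ext with (fun _ => / u); [|apply is_RInt_cst].
    intros x Hx. rewrite Rmin_left in Hx by lra. rewrite Rmax_right in Hx by lra.
    unfold K; destruct Rlt_dec; [auto|lra].
  - apply is_RInt_Chasles' with u.
    + apply is_RInt_ext with (fun v => / 2 * / v).
      2: exact (is_RInt_scal _ _ _ _ _ (int_inv (u / 2) u ltac:(lra) ltac:(lra))).
      intros x Hx. rewrite Rmin_left in Hx by lra. rewrite Rmax_right in Hx by lra.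
      unfold K; destruct Rlt_dec; [lra|]. destruct Rlt_dec; [|lra]. rewrite Rinv_mult; auto.
    + apply is_RInt_ext with (fun v => / v); [|apply int_inv; lra].
      intros x Hx. rewrite Rmin_left in Hx by lra. rewrite Rmax_right in Hx by lra.
      unfold K; destruct Rlt_dec; [lra|]. destruct Rlt_dec; [lra|auto].
Qed.

Lemma is_RInt_fold {A : Type} (l : list A) (w : A -> R) (h : A -> R -> R) (I : A -> R) a b :
  (forall x, In x l -> is_RInt (h x) a b (I x)) ->
  is_RInt (fun v => fold_right (fun x acc => w x * h x v + acc) 0 l) a b
          (fold_right (fun x acc => w x * I x + acc) 0 l).
Proof.
  induction l as [|x l IH]; simpl; intros H.
  - apply is_RInt_val with ((b - a) * 0); [apply is_RInt_cst|ring].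
  - exact (is_RInt_plus _ _ _ _ _ _ (is_RInt_scal _ _ _ (w x) _ (H x (or_introl eq_refl)))
            (IH (fun y Hy => H y (or_intror Hy)))).
Qed.

Definition W (v u : R) : R :=
  if Rle_dec u v then 0 else if Rle_dec u (2 * v) then / 2 else 1 - v / u.
Definition Wsum (v : R) (a : list R) : R := fold_right (fun x acc => x * W v x + acc) 0 a.
Definition mu (g : list R) (v : R) : R :=
  fold_right (fun t acc => (if Rle_dec t v then 0 else t) + acc) 0 g.
Definition RelE (v x y : R) : Prop := y <= x /\ (y < x -> v <= x - y).
Definition Rel (v : R) (a c : list R) : Prop := List.Forall2 (RelE v) a c.

Lemma half_le v u : 0 < v -> 2 * v < u -> / 2 <= 1 - v / u.
Proof.
  intros Hv Hu. assert (v / u <= / 2).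
  { unfold Rdiv. apply Rmult_le_reg_l with (2*u); [lra|].
    replace (2*u*(v*/u)) with (2*v) by (field; lra).
    replace (2*u*/2) with u by field. lra. }
  lra.
Qed.

Lemma W_mono v u1 u2 : 0 < v -> u1 <= u2 -> W v u1 <= W v u2.
Proof.
  intros Hv H. unfold W.
  destruct (Rle_dec u1 v); destruct (Rle_dec u2 v);
  destruct (Rle_dec u1 (2*v)); destruct (Rle_dec u2 (2*v)); try lra;
  try (pose proof (half_le v u2 Hv ltac:(lra)); lra).
  assert (v / u2 <= v / u1).
  { unfold Rdiv. apply Rmult_le_compat_l; [lra|]. apply Rinv_le_contravar; lra. } lra.
Qed.

Lemma rel_final v a c : 0 < v -> Rel v a c -> List.Forall (fun y => y <= v) c ->
  Wsum v a <= suml a - suml c.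
Proof.
  intros Hv. induction 1 as [|x y a c [H1 H2] HR IH]; simpl; intros Hc; [lra|].
  inversion Hc as [|? ? Hy Hc']; subst. specialize (IH Hc').
  unfold Wsum in *; simpl.
  assert (x * W v x <= x - y).
  { unfold W. destruct (Rle_dec x v); [lra|]. destruct (Rle_dec x (2*v)).
    - assert (v <= x - y) by (apply H2; lra). lra.
    - replace (x * (1 - v / x)) with (x - v) by (field; lra). lra. }
  lra.
Qed.

Lemma maxl_ge c y : In y c -> y <= maxl c.
Proof.
  induction c as [|a c IH]; simpl; [tauto|]. intros [<-|H]; [apply Rmax_l|].
  eapply Rle_trans; [apply IH; auto|apply Rmax_r].
Qed.

Lemma maxl_nonneg c : 0 <= maxl c.
Proof. induction c; simpl; [lra|]. eapply Rle_trans; [apply IHc|apply Rmax_r]. Qed.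

Lemma minmax_le st c : In c st -> minmax st <= maxl c.
Proof.
  destruct st as [|p st']; simpl; [tauto|]. intros [<-|H].
  - induction st' as [|q st'' IH]; simpl; [lra|]. eapply Rle_trans; [apply Rmin_r|]; auto.
  - induction st' as [|q st'' IH]; simpl in *; [tauto|].
    destruct H as [<-|H]; [apply Rmin_l|]. eapply Rle_trans; [apply Rmin_r|]; auto.
Qed.

Lemma minmax_att st : st <> [] -> exists c, In c st /\ minmax st = maxl c.
Proof.
  destruct st as [|p st']; simpl; [tauto|]. intros _.
  induction st' as [|r st'' IH]; simpl.
  - exists p; auto.
  - unfold Rmin; destruct Rle_dec.
    + exists r; simpl; auto.
    + destruct IH as [q [Hq E]]; exists q; split; auto. simpl in Hq |- *; tauto.
Qed.

Lemma minmax_nonneg st : 0 <= minmax st.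
Proof.
  destruct st as [|p st']; simpl; [lra|].
  induction st' as [|q st'' IH]; simpl; [apply maxl_nonneg|].
  unfold Rmin; destruct Rle_dec; auto; apply maxl_nonneg.
Qed.

Lemma Forall2_in_r {A B : Type} (P : A -> B -> Prop) l1 l2 y :
  List.Forall2 P l1 l2 -> In y l2 -> exists x, In x l1 /\ P x y.
Proof.
  induction 1 as [|a b l1 l2 Hab H IH]; simpl; [tauto|].
  intros [<-|Hy]; [exists a; auto|]. destruct (IH Hy) as [x [Hx Px]]; exists x; auto.
Qed.

Lemma Forall2_nth' (P : R -> R -> Prop) a c i :
  List.Forall2 P a c -> (i < length c)%nat -> P (nth i a 0) (nth i c 0).
Proof.
  intros H; revert i; induction H as [|x y a c Hxy H IH]; simpl; intros i Hi; [lia|].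
  destruct i; auto. apply IH; lia.
Qed.

Lemma Forall2_replace (P : R -> R -> Prop) a c i x :
  List.Forall2 P a c -> P (nth i a 0) x -> List.Forall2 P a (replace_nth i x c).
Proof.
  intros H; revert i; induction H as [|y z a c Hyz H IH]; intros i Hi; [destruct i; constructor|].
  destruct i; constructor; auto.
Qed.

Lemma Forall_replace (P : R -> Prop) c i x :
  List.Forall P c -> P x -> List.Forall P (replace_nth i x c).
Proof.
  intros H; revert i; induction H as [|y c Hy H IH]; intros i Hx; [destruct i; constructor|].
  destruct i; constructor; auto.
Qed.

Lemma suml_replace c i x : (i < length c)%nat ->
  suml (replace_nth i x c) = suml c - nth i c 0 + x.
Proof.
  revert i; induction c as [|a c IH]; simpl; intros i Hi; [lia|].
  destruct i; simpl; [ring|]. rewrite IH by lia. ring.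
Qed.

Lemma sub_step v r a c c' : 0 < v -> v < r -> r <= maxl c -> Rel v a c ->
  sub_largest r c c' -> Rel v a c' /\ suml c' = suml c - r.
Proof.
  intros Hv Hr Hm HR [i [Hi [Hn ->]]]. split.
  - apply Forall2_replace; auto.
    destruct (Forall2_nth' _ _ _ i HR Hi) as [h1 h2]. split; [lra|]. intros _. lra.
  - rewrite suml_replace by auto. ring.
Qed.

Lemma step_all v r A st st' sg : 0 < v -> v < r -> (forall c, In c st -> r <= maxl c) ->
  List.Forall2 (Rel v) A st -> List.Forall2 (sub_largest r) st st' ->
  (forall c, In c st -> suml c = sg) ->
  List.Forall2 (Rel v) A st' /\ (forall c', In c' st' -> suml c' = sg - r).
Proof.
  intros Hv Hr Hm HA. revert st'.
  induction HA as [|a c A st Hac HA IH]; intros st' Hs Hsum.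
  - inversion Hs; subst. split; [constructor|simpl; tauto].
  - inversion Hs as [|? c' ? st'' Hcc' Hs']; subst.
    destruct (sub_step v r a c c' Hv Hr (Hm c (or_introl eq_refl)) Hac Hcc') as [R1 E1].
    destruct (IH (fun x Hx => Hm x (or_intror Hx)) st'' Hs' (fun x Hx => Hsum x (or_intror Hx)))
      as [R2 E2].
    split; [constructor; auto|].
    intros x [<-|Hx]; auto. rewrite E1, (Hsum c (or_introl eq_refl)); auto.
Qed.

Lemma mu_nonneg g v : 0 < v -> 0 <= mu g v.
Proof. intros Hv; induction g as [|t g IH]; simpl; [lra|]. destruct Rle_dec; lra. Qed.

Lemma stop_bound v A st sg : 0 < v -> st <> [] -> minmax st <= v ->
  List.Forall2 (Rel v) A st -> (forall c, In c st -> suml c = sg) ->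
  (forall a, In a A -> suml a = 1) -> exists a, In a A /\ Wsum v a <= 1 - sg.
Proof.
  intros Hv Hne Hm HA Hs H1.
  destruct (minmax_att st Hne) as [c [Hc Ec]].
  destruct (Forall2_in_r _ _ _ _ HA Hc) as [a [Ha Rac]].
  exists a; split; auto.
  assert (Hf : List.Forall (fun y => y <= v) c).
  { apply List.Forall_forall. intros y Hy. pose proof (maxl_ge c y Hy). lra. }
  pose proof (rel_final v a c Hv Rac Hf). rewrite (H1 a Ha), (Hs c Hc) in H. exact H.
Qed.

Lemma key st g : greedy_run st g -> forall v A sg, 0 < v -> st <> [] ->
  List.Forall2 (Rel v) A st -> (forall c, In c st -> suml c = sg) ->
  (forall a, In a A -> suml a = 1) -> exists a, In a A /\ Wsum v a <= (1 - sg) + mu g v.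
Proof.
  induction 1 as [st Hst | st st' g Hne Hsub Hrun IH]; intros v A sg Hv Hstne HA Hs H1.
  - destruct (stop_bound v A st sg Hv Hstne ltac:(lra) HA Hs H1) as [a [Ha Hw]].
    exists a; split; auto. simpl. lra.
  - destruct (Rle_dec (minmax st) v) as [hle|hgt].
    + destruct (stop_bound v A st sg Hv Hstne hle HA Hs H1) as [a [Ha Hw]].
      exists a; split; auto. pose proof (mu_nonneg (minmax st :: g) v Hv). lra.
    + destruct (step_all v (minmax st) A st st' sg Hv ltac:(lra)
                  (fun c Hc => minmax_le st c Hc) HA Hsub Hs) as [HA' Hs'].
      assert (Hne' : st' <> []).
      { intros E; subst. inversion Hsub; subst; auto. }
      destruct (IH v A (sg - minmax st) Hv Hne' HA' Hs' H1) as [a [Ha Hw]].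
      exists a; split; auto. simpl. destruct Rle_dec; [lra|]. lra.
Qed.

Lemma suml_zero c : List.Forall (fun y => 0 <= y) c -> (forall y, In y c -> y <= 0) -> suml c = 0.
Proof.
  induction 1 as [|a c Ha Hc IH]; simpl; intros H; [auto|].
  rewrite IH by auto. specialize (H a (or_introl eq_refl)). lra.
Qed.

Lemma sub_nonneg r c c' : sub_largest r c c' -> r <= maxl c ->
  List.Forall (fun y => 0 <= y) c -> List.Forall (fun y => 0 <= y) c' /\ suml c' = suml c - r.
Proof.
  intros [i [Hi [Hn ->]]] Hm Hc. split.
  - apply Forall_replace; auto. lra.
  - rewrite suml_replace by auto. ring.
Qed.

Lemma step_nonneg r st st' sg : (forall c, In c st -> r <= maxl c) ->
  List.Forall2 (sub_largest r) st st' ->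
  List.Forall (List.Forall (fun y => 0 <= y)) st ->
  (forall c, In c st -> suml c = sg) ->
  List.Forall (List.Forall (fun y => 0 <= y)) st' /\ (forall c', In c' st' -> suml c' = sg - r).
Proof.
  intros Hm Hs. induction Hs as [|c c' st st' Hcc' Hs IH]; intros Hn Hsum.
  - split; [constructor|simpl; tauto].
  - inversion Hn as [|? ? Hc Hn']; subst.
    destruct (sub_nonneg r c c' Hcc' (Hm c (or_introl eq_refl)) Hc) as [N1 E1].
    destruct (IH (fun x Hx => Hm x (or_intror Hx)) Hn' (fun x Hx => Hsum x (or_intror Hx)))
      as [N2 E2].
    split; [constructor; auto|].
    intros x [<-|Hx]; auto. rewrite E1, (Hsum c (or_introl eq_refl)); auto.
Qed.

Lemma gsum st g : greedy_run st g -> forall sg, st <> [] ->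
  List.Forall (List.Forall (fun y => 0 <= y)) st -> (forall c, In c st -> suml c = sg) ->
  suml g = sg /\ List.Forall (fun t => 0 < t) g.
Proof.
  induction 1 as [st Hst | st st' g Hne Hsub Hrun IH]; intros sg Hstne Hn Hs.
  - destruct (minmax_att st Hstne) as [c [Hc Ec]].
    assert (suml c = 0).
    { apply suml_zero. rewrite List.Forall_forall in Hn; auto.
      intros y Hy. pose proof (maxl_ge c y Hy). lra. }
    rewrite (Hs c Hc) in H. subst. split; [reflexivity|constructor].
  - pose proof (minmax_nonneg st).
    destruct (step_nonneg (minmax st) st st' sg (fun c Hc => minmax_le st c Hc) Hsub Hn Hs)
      as [Hn' Hs'].
    assert (Hne' : st' <> []).
    { intros E; subst. inversion Hsub; subst; auto. }
    destruct (IH (sg - minmax st) Hne' Hn' Hs') as [E F].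
    simpl. split; [rewrite E; ring|]. constructor; auto. lra.
Qed.

Lemma is_RInt_unique' (f : R -> R) a b (l : R) : is_RInt f a b l -> RInt f a b = l.
Proof. intros H; exact (is_RInt_unique f a b l H). Qed.

Lemma fold_lin {A : Type} (L : list A) (w h : A -> R) c :
  fold_right (fun x acc => w x * (c - h x) + acc) 0 L =
  c * fold_right (fun x acc => w x * 1 + acc) 0 L + fold_right (fun x acc => w x * (- h x) + acc) 0 L.
Proof. induction L as [|x L IH]; simpl; [ring|]. rewrite IH. ring. Qed.

Lemma lhs_eq g v : 0 < v ->
  v * fold_right (fun t acc => t * J t v + acc) 0 g = suml g - mu g v.
Proof.
  intros Hv; induction g as [|t g IH]; simpl; [ring|].
  rewrite Rmult_plus_distr_l, IH. unfold J. destruct Rle_dec; field; lra.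
Qed.

Lemma Kv u v : 0 < u -> 0 < v -> v * K u v = 1 - W v u.
Proof.
  intros Hu Hv. unfold K, W.
  destruct (Rlt_dec v (u/2)).
  - destruct Rle_dec; [lra|]. destruct Rle_dec; [lra|]. field; lra.
  - destruct (Rlt_dec v u).
    + destruct Rle_dec; [lra|]. destruct Rle_dec; [|lra]. field; lra.
    + destruct Rle_dec; [|lra]. field; lra.
Qed.

Lemma rhs_eq (L : list (R * R)) (P : R -> R) v : 0 < v -> (forall pr, In pr L -> 0 < P (snd pr)) ->
  v * fold_right (fun pr acc => fst pr * K (P (snd pr)) v + acc) 0 L =
  wsum (fun _ => 1) P L - wsum (W v) P L.
Proof.
  intros Hv HL; induction L as [|pr L IH]; unfold wsum in *; simpl; [ring|].
  rewrite Rmult_plus_distr_l, IH by (intros; apply HL; simpl; auto).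
  assert (E : v * (fst pr * K (P (snd pr)) v) = fst pr * (v * K (P (snd pr)) v)) by ring.
  rewrite E, Kv by (auto; apply HL; simpl; auto). ring.
Qed.

Lemma hseq_eq g : List.Forall (fun t => 0 < t) g ->
  H_seq g = fold_right (fun t acc => t * (- ln t) + acc) 0 g / ln 2.
Proof.
  assert (0 < ln 2) by (pose proof ln_lt_2; lra).
  induction 1 as [|t g Ht Hg IH]; unfold H_seq in *; simpl; [field; lra|].
  rewrite IH. unfold log2. rewrite ln_Rinv by auto. field; lra.
Qed.

Lemma hprof_eq (L : list (R * R)) (P : R -> R) : (forall pr, In pr L -> 0 < P (snd pr)) ->
  wsum (fun u => log2 (/ u)) P L = wsum (fun u => - ln u) P L / ln 2.
Proof.
  assert (0 < ln 2) by (pose proof ln_lt_2; lra).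
  intros HL; induction L as [|pr L IH]; unfold wsum in *; simpl; [field; lra|].
  rewrite IH by (intros; apply HL; simpl; auto). unfold log2.
  rewrite ln_Rinv by (apply HL; simpl; auto). field; lra.
Qed.

Lemma in_le_suml l t : List.Forall (fun y => 0 <= y) l -> In t l -> t <= suml l.
Proof.
  induction 1 as [|a l Ha Hl IH]; simpl; [tauto|].
  pose proof (suml_nonneg l Hl). intros [<-|H']; [lra|]. specialize (IH H'); lra.
Qed.

Lemma rel_refl v l : List.Forall2 (Rel v) l l.
Proof.
  induction l as [|a l IH]; constructor; auto.
  unfold Rel. clear IH. induction a; constructor; auto. split; [lra|intros; lra].
Qed.

Theorem theorem3 :
  forall (S : list (list R)),
    (1 <= length S)%nat ->
    List.Forall is_distr S ->
    forall g : list R, greedy_run S g ->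
    H_seq g <= H_Profile S + (1 + log2 (exp 1)) / 2.
Proof.
  intros Sd Hlen Hd g Hrun.
  assert (Hne : Sd <> []) by (intros E; subst; simpl in Hlen; lia).
  assert (Hdis : forall p, In p Sd -> List.Forall (fun a => 0 <= a) p /\ suml p = 1).
  { intros p Hp. rewrite List.Forall_forall in Hd. destruct (Hd p Hp) as [H1 [H2 _]]. auto. }
  assert (Hln2 : 0 < ln 2) by (pose proof ln_lt_2; lra).
  destruct (gsum Sd g Hrun 1 Hne) as [Hg1 Hgpos].
  { apply List.Forall_forall. intros p Hp; apply Hdis; auto. }
  { intros c Hc; apply Hdis; auto. }
  assert (Hgb : forall t, In t g -> 0 < t <= 1).
  { intros t Ht. rewrite List.Forall_forall in Hgpos. split; [auto|].
    rewrite <- Hg1. apply in_le_suml; auto.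
    apply List.Forall_forall. intros y Hy. pose proof (Hgpos y Hy). lra. }
  destruct (decomp (flat_map bp Sd) (Profile Sd) 0 1 ltac:(lra)) as [L [HL HI]].
  { intros x y _ _ H. apply prof_const; auto. }
  assert (HP : forall x, 0 < x < 1 -> 0 < Profile Sd x <= 1).
  { intros x Hx. destruct (prof_attained Sd x Hne) as [q [Hq E]]. rewrite E.
    destruct (Hdis q Hq) as [N1 N2]. split.
    - apply sketch_pos; auto. lra.
    - rewrite <- N2. apply sketch_le; auto. }
  assert (HLP : forall pr, In pr L -> 0 < Profile Sd (snd pr) <= 1).
  { intros pr Hpr. apply HP. apply HL; auto. }
  assert (Hl1 : wsum (fun _ => 1) (Profile Sd) L = 1).
  { pose proof (is_RInt_unique' _ _ _ _ (HI (fun _ => 1))) as E1.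
    pose proof (is_RInt_unique' _ _ _ _ (is_RInt_cst 1 0 1)) as E2.
    cbv beta in E1, E2. rewrite E1 in E2. lra. }
  assert (HPr : H_Profile Sd = wsum (fun u => log2 (/ u)) (Profile Sd) L).
  { unfold H_Profile. apply is_RInt_unique'. exact (HI (fun u => log2 (/ u))). }
  rewrite HPr, hseq_eq by auto.
  rewrite hprof_eq by (intros pr Hpr; apply HLP; auto).
  set (Ag := fold_right (fun t acc => t * (- ln t) + acc) 0 g).
  set (B := wsum (fun u => - ln u) (Profile Sd) L).
  assert (Hmain : Ag <= B + (1 + ln 2) / 2).
  { pose proof (is_RInt_fold g (fun t => t) J (fun t => - ln t) 0 1
                  (fun t Ht => J_int t (Hgb t Ht))) as IA.
    pose proof (is_RInt_fold L fst (fun pr => K (Profile Sd (snd pr)))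
                  (fun pr => (1 + ln 2) / 2 - ln (Profile Sd (snd pr))) 0 1
                  (fun pr Hpr => K_int _ (HLP pr Hpr))) as IB.
    cbv beta in IA, IB.
    assert (Hpt : forall v, 0 < v < 1 ->
      fold_right (fun t acc => t * J t v + acc) 0 g <=
      fold_right (fun pr acc => fst pr * K (Profile Sd (snd pr)) v + acc) 0 L).
    {     intros v Hv.
    apply Rmult_le_reg_l with v; [lra|].
    rewrite lhs_eq by lra.
    rewrite rhs_eq by (lra || (intros pr Hpr; apply HLP; auto)).
    rewrite Hl1, Hg1.
    destruct (key Sd g Hrun v Sd 1 ltac:(lra) Hne (rel_refl v Sd)
               (fun c Hc => proj2 (Hdis c Hc)) (fun c Hc => proj2 (Hdis c Hc)))
      as [a [Ha Hw]].
    destruct (Hdis a Ha) as [Na Sa].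
    pose proof (sketch_int (W v) a Na) as Ia. rewrite Sa in Ia.
    pose proof (is_RInt_le _ _ 0 1 _ _ ltac:(lra) (HI (W v)) Ia) as Hc.
    assert (wsum (W v) (Profile Sd) L <= Wsum v a).
    { unfold Wsum. apply Hc. intros x Hx. apply W_mono; [lra|]. apply prof_le; auto. }
    lra. }
    pose proof (is_RInt_le _ _ 0 1 _ _ ltac:(lra) IA IB Hpt) as Hle.
    rewrite fold_lin in Hle.
    unfold B, wsum; unfold wsum in Hl1. cbv beta in Hl1 |- *. rewrite Hl1 in Hle.
    change (fold_right (fun x acc : R => x * - ln x + acc) 0 g) with Ag in Hle. lra.
  }
  assert (Hl2 : log2 (exp 1) = / ln 2) by (unfold log2; rewrite ln_exp; field; lra).
  rewrite Hl2.
  replace (B / ln 2 + (1 + / ln 2) / 2) with ((B + (1 + ln 2) / 2) / ln 2) by (field; lra).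
  unfold Rdiv. apply Rmult_le_compat_r; [left; apply Rinv_0_lt_compat; lra|]. exact Hmain.
Qed.
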